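(* In the algorithm CertifiedCurveTracking (described in the context), the updated point $\hat x=(X(h),\hat x_n+h)$, formed after the inner step-size loop exits, is a $\tau$-approximate solution to $\hat C$.
   Context: Setting: $C=\{c_1,\dots,c_{n-1}\}\subset\mathbb{Q}[X_1,\dots,X_n]$ defines a regular real curve (Jacobian of full rank at every point, no self-intersections). For a value or interval $a$, $C_a$ is the square system $(c_i(X_1,\dots,X_{n-1},a))_i$; $x_{-n}=(x_1,\dots,x_{n-1})$; $B=[-1,1]^{n-1}$. KrawczykTest$(F,y,s,A,\rho)$ returns True iff $\|-\frac1sAF(y)+(I-A\square JF(y+sB))B\|<\rho$, computed in interval arithmetic (with $\square$ an interval extension and $\|\cdot\|$ the maximal magnitude/induced $\infty$-norm over intervals), evaluated simultaneously over interval slice values and interval points when these are intervals. A point $x\in\mathbb{R}^n$ is a $\tau$-approximate solution to a curve $\hat C$ if there exist an invertible matrix $A$ and $r>0$ such that $-A\hat C_{x_n}(x_{-n})+(I-A\,J\hat C_{x_n}(x_{-n}+rB))rB\subset r\tau B$. In CertifiedCurveTracking (inputs: curve $C$, point, $r>0$, $h>0$, compact $D$, $\rho\in(0,\frac12]$, $\tau\in(\frac12,1)$), at each step one obtains a transformed curve $\hat C(X)=U^*C(VX)$ (from an SVD of the Jacobian), a point $\hat x$, radius $r$ and matrix $A$ from a refinement procedure; a predictor $X(\eta)$ ($\eta\ge0$, user-chosen, continuous, $X(0)=\hat x_{-n}$) is extended by $\hat X(\eta)=\hat x_{-n}$ for $\eta<0$, $\hat X(\eta)=X(\eta)$ for $\eta\ge0$;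 the step size $h$ is halved (and the predictor recomputed) until KrawczykTest$(\hat C_{\hat x_n+[-r\rho,h]},\hat X([-r\rho,h]),r,A,\tau)$ returns True; then one sets $\hat x=(X(h),\hat x_n+h)$. *)

(* Defs.v *)
From HB Require Import structures.
From mathcomp Require Import all_boot all_order all_algebra.
From mathcomp Require Import all_classical all_reals all_analysis.
From mathcomp Require mpoly.
Set Implicit Arguments. Unset Strict Implicit. Unset Printing Implicit Defensive.
Import Order.TTheory GRing.Theory Num.Theory.
Import numFieldNormedType.Exports.
Local Open Scope classical_set_scope.
Local Open Scope ring_scope.

Section Curve.
Variable R : realType.
Variable m : nat.   (* m = n - 1 : number of equations; points of R^n live in 'cV_(m+1) *)

Definition polyEval (C : 'I_m -> mpoly.mpoly (m + 1) rat) (x : 'cV[R]_(m + 1))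
  : 'cV[R]_m :=
  \col_i mpoly.mmap (fun q : rat => ratr q) (fun j => x j 0) (C i).

Definition fullJac (F : 'cV[R]_(m + 1) -> 'cV[R]_m) (x : 'cV[R]_(m + 1))
  : 'M[R]_(m, m + 1) :=
  \matrix_(i, j) 'D_(delta_mx j 0 : 'cV[R]_(m + 1)) (fun z => F z i 0) x.

Definition regular_curve (F : 'cV[R]_(m + 1) -> 'cV[R]_m) : Prop :=
  forall x, F x = 0 -> \rank (fullJac F x) = m.

(* Transformed curve  \hat C(X) = U^* C(V X)  (real matrices: U^* = U^T). *)
Definition transformed (F : 'cV[R]_(m + 1) -> 'cV[R]_m)
  (U : 'M[R]_m) (V : 'M[R]_(m + 1)) (x : 'cV[R]_(m + 1)) : 'cV[R]_m :=
  U^T *m F (V *m x).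

Definition slice (F : 'cV[R]_(m + 1) -> 'cV[R]_m) (a : R) (y : 'cV[R]_m)
  : 'cV[R]_m := F (col_mx y (a%:M)).

Definition sliceJac (F : 'cV[R]_(m + 1) -> 'cV[R]_m) (a : R) (y : 'cV[R]_m)
  : 'M[R]_m :=
  \matrix_(i, j) 'D_(delta_mx j 0 : 'cV[R]_m) (fun z => slice F a z i 0) y.

Definition xmn (x : 'cV[R]_(m + 1)) : 'cV[R]_m := usubmx x.
Definition xlast (x : 'cV[R]_(m + 1)) : R := dsubmx x 0 0.

Definition inB (b : 'cV[R]_m) : Prop := forall i, `|b i 0| <= 1.
Definition supnorm (v : 'cV[R]_m) : R := \big[Num.max/0]_i `|v i 0|.

(* KrawczykTest(F, Y, s, A, rho) with an interval of slice values T and a set of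
   points Y: the (exact range of the) Krawczyk expression
   -1/s A F_t(y) + (I - A JF_t(y + sB)) B  has norm < rho.  Since the interval
   evaluation encloses this range, the test returning True implies this. *)
Definition KrawczykTest (F : 'cV[R]_(m + 1) -> 'cV[R]_m) (T : set R)
  (Y : set 'cV[R]_m) (s : R) (A : 'M[R]_m) (rho : R) : Prop :=
  forall t y b' b, T t -> Y y -> inB b' -> inB b ->
    supnorm (- (s^-1 *: (A *m slice F t y))
             + (1%:M - A *m sliceJac F t (y + s *: b')) *m b) < rho.

Definition approx_solution (F : 'cV[R]_(m + 1) -> 'cV[R]_m)
  (x : 'cV[R]_(m + 1)) (tau : R) : Prop :=
  exists (A : 'M[R]_m) (r : R), A \in unitmx /\ 0 < r /\
    forall b' b, inB b' -> inB b ->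
      forall i, `|(- (A *m slice F (xlast x) (xmn x))
         + (1%:M - A *m sliceJac F (xlast x) (xmn x + r *: b')) *m (r *: b)) i 0|
        <= r * tau.

Definition extPredictor (X : R -> 'cV[R]_m) (y0 : 'cV[R]_m) (eta : R) : 'cV[R]_m :=
  if eta < 0 then y0 else X eta.

End Curve.

(* Main.v *)
Require Import Defs.
From HB Require Import structures.
From mathcomp Require Import all_boot all_order all_algebra.
From mathcomp Require Import all_classical all_reals all_analysis.
From mathcomp Require mpoly.
Import Order.TTheory GRing.Theory Num.Theory.
Import numFieldNormedType.Exports.
Local Open Scope classical_set_scope.
Local Open Scope ring_scope.

Lemma supnorm_ge {R : realType} {m : nat} (v : 'cV[R]_m) (i : 'I_m) :
  `|v i 0| <= supnorm v.
Proof. by rewrite /supnorm (bigD1 i) //= le_max lexx. Time Qed.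

Lemma supnorm_lt {R : realType} {m : nat} (v : 'cV[R]_m) (t : R) (i : 'I_m) :
  supnorm v < t -> `|v i 0| <= t.
Proof. move=> H; have H1 := supnorm_ge v i. exact: (le_trans H1 (ltW H)). Time Qed.

Lemma supnorm_ge0 {R : realType} {m : nat} (v : 'cV[R]_m) : 0 <= supnorm v.
Proof.
rewrite /supnorm; elim/big_rec: _ => // i x _ hx.
by rewrite le_max hx orbT.
Qed.

Lemma inv_part {R : realType} {m : nat} (F : 'cV[R]_(m + 1) -> 'cV[R]_m)
  (t : R) (y : 'cV[R]_m) (r tau : R) (A : 'M[R]_m) :
  0 < r -> tau < 1 ->
  (forall b, inB b -> supnorm (- (r^-1 *: (A *m slice F t y))
     + (1%:M - A *m sliceJac F t (y + r *: 0)) *m b) < tau) ->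
  A \in unitmx.
Proof.
move=> r0 tau1 K.
rewrite unitmxE unitfE; apply/negP => /det0P [u u0 uA].
pose b : 'cV[R]_m := \col_i Num.sg (u 0 i).
have bB : inB b by move=> i; rewrite mxE normr_sg; case: (_ == 0).
pose w : 'cV[R]_m := - (r^-1 *: (A *m slice F t y))
     + (1%:M - A *m sliceJac F t (y + r *: 0)) *m b.
have Hw : supnorm w < tau := K b bB.
have uw : (u *m w) 0 0 = \sum_j `|u 0 j|.
  rewrite /w mulmxDr mulmxN -scalemxAr mulmxA uA mul0mx !scaler0 oppr0 add0r.
  rewrite mulmxA mulmxBr mulmx1 mulmxA uA !mul0mx subr0 mxE.
  by apply: eq_bigr => j _; rewrite mxE mulrC -normrEsg.
have S0 : 0 < \sum_j `|u 0 j|.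
  have [j uj] : exists j, u 0 j != 0.
    apply/existsP; move: u0; apply: contraR; rewrite negb_exists => /forallP H.
    by apply/eqP/matrixP => i j; rewrite (ord1 i) mxE; apply/eqP/negPn/H.
  rewrite (bigD1 j) //=; apply: ltr_pwDl; first by rewrite normr_gt0.
  by apply: sumr_ge0 => k _.
have HS : \sum_j `|u 0 j| <= (\sum_j `|u 0 j|) * supnorm w.
  rewrite -{1}uw; apply: (le_trans (ler_norm _)); rewrite mxE mulr_suml.
  apply: (le_trans (ler_norm_sum _ _ _)).
  apply: ler_sum => j _; rewrite normrM; apply: ler_wpM2l => //.
  exact: supnorm_ge.
have : (\sum_j `|u 0 j|) * supnorm w < \sum_j `|u 0 j|.
  rewrite -{2}(mulr1 (\sum_j `|u 0 j|)) ltr_pM2l //; exact: lt_trans Hw tau1.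
by rewrite ltNge HS.
Qed.

Lemma bound_part {R : realType} {m : nat} (F : 'cV[R]_(m + 1) -> 'cV[R]_m)
  (t : R) (y : 'cV[R]_m) (r tau : R) (A : 'M[R]_m) b' b i :
  0 < r ->
  supnorm (- (r^-1 *: (A *m slice F t y))
     + (1%:M - A *m sliceJac F t (y + r *: b')) *m b) < tau ->
  `|(- (A *m slice F t y)
         + (1%:M - A *m sliceJac F t (y + r *: b')) *m (r *: b)) i 0|
        <= r * tau.
Proof.
move=> r0 Hw.
have Hwi := supnorm_lt _ _ i Hw.
set M := (1%:M - _); set s := A *m _.
have -> : - s + M *m (r *: b) = r *: (- (r^-1 *: s) + M *m b).
  by rewrite scalerDr scalerN scalerA mulfV ?(negbT (gt_eqF r0)) // scale1r -scalemxAr.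
rewrite mxE normrM gtr0_norm //; apply: ler_wpM2l; first exact: ltW.
exact: Hwi.
Qed.

Theorem mainTheorem3 (R : realType) (m : nat)
  (C : 'I_m -> mpoly.mpoly (m + 1) rat)
  (U : 'M[R]_m) (V : 'M[R]_(m + 1))
  (xhat : 'cV[R]_(m + 1)) (r h rho tau : R) (A : 'M[R]_m)
  (X : R -> 'cV[R]_m) :
  regular_curve (@polyEval R m C) ->
  U *m U^T = 1%:M -> V *m V^T = 1%:M ->
  0 < r -> 0 < h -> 0 < rho -> rho <= 2^-1 -> 2^-1 < tau -> tau < 1 ->
  {within [set eta : R | 0 <= eta], continuous X} ->
  X 0 = xmn xhat ->
  KrawczykTest (transformed (@polyEval R m C) U V)
    [set t | xlast xhat - r * rho <= t <= xlast xhat + h]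
    [set extPredictor X (xmn xhat) eta | eta in [set e | - (r * rho) <= e <= h]]
    r A tau ->
  approx_solution (transformed (@polyEval R m C) U V)
    (col_mx (X h) ((xlast xhat + h)%:M)) tau.
Proof.
move=> _ _ _ r0 h0 rho0 _ _ tau1 _ _ K.
set F := transformed _ U V.
have Ht : xlast xhat - r * rho <= xlast xhat + h <= xlast xhat + h.
  rewrite lexx andbT; apply: lerD; first exact: lexx.
  apply: (@le_trans _ _ 0); last exact: ltW.
  by rewrite oppr_le0; apply: ltW; apply: mulr_gt0.
have Hy : [set extPredictor X (xmn xhat) eta | eta in [set e | - (r * rho) <= e <= h]] (X h).
  exists h; last by rewrite /extPredictor ltNge (ltW h0).
  rewrite /= lexx andbT; apply: (@le_trans _ _ 0); last exact: ltW.
  by rewrite oppr_le0; apply: ltW; apply: mulr_gt0.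
have ExmnE : xmn (col_mx (X h) ((xlast xhat + h)%:M)) = X h by rewrite /xmn col_mxKu.
have ExlE : xlast (col_mx (X h) ((xlast xhat + h)%:M)) = xlast xhat + h.
  by rewrite /xlast col_mxKd mxE eqxx mulr1n.
exists A, r; split; last split => //.
- apply: (@inv_part R m _ (xlast xhat + h) (X h) r tau A r0 tau1) => b bB.
  apply: K => //; by move=> k; rewrite mxE normr0 ler01.
- move=> b' b b'B bB i; rewrite ExmnE ExlE.
  apply: bound_part => //.
  exact: K.
Qed.
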